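(* Let $R$ be a commutative ring with identity, let $\boldsymbol{u}=(u_0,u_1,\dots)\in H_R$, and let $q(x)=\tau(x\boldsymbol{u})=(q_n(x))_{n\ge0}$, with $q_0(x)=1$ and $q_n(x)=\sum_{i=1}^nc_{i,n}x^i$ for $n\ge1$. Then $u_0=c_{1,1}$ and for every $m\ge2$, $$u_{m-1}=c_{1,m}+\sum_{\substack{k\mid m\\ k\neq1,m}}\frac{(-1)^{m/k}\,m!}{\frac{m}{k}\,(k!)^{m/k}}\,u_{k-1}.$$ In particular $u_{p-1}=c_{1,p}$ for every prime $p$.
   Context: $H_S$: sequences in a commutative ring $S$; $U_S$: those with first term $1$, a group under the Hurwitz product $(\boldsymbol{a}\star\boldsymbol{b})_n=\sum_{h=0}^n\binom{n}{h}a_hb_{n-h}$. Powers: for $\boldsymbol a=(1,a_1,\dots)\in U_S$ and $z\in S$, $\boldsymbol a^z[n]=\sum_{k=0}^nY_{n,k}(a_1,\dots,a_{n-k+1})\,z(z-1)\cdots(z-k+1)$ with $Y_{n,k}(y_1,y_2,\dots)=\sum\frac{n!}{\prod_l j_l!(l!)^{j_l}}\prod_ly_l^{j_l}$ over nonnegative $(j_l)$, $\sum j_l=k$, $\sum lj_l=n$ ($Y_{0,0}=1$, $Y_{n,0}=0$ for $n\ge1$); over $\mathbb Q$-algebras this is the sequence with e.g.f. $A(t)^z$. $\boldsymbol{b}^{(1)}=(1,1,1,\dots)$; for $i\ge2$, $\boldsymbol{b}^{(i)}$ has entries $1$ at positions $0$ and $i$, $0$ elsewhere. For $\boldsymbol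 z\in H_S$, $\tau(\boldsymbol z)\in U_S$ is the sequence whose first $n$ terms, for each $n\ge2$, are those of $(\boldsymbol{b}^{(1)})^{z_0}\star\cdots\star(\boldsymbol{b}^{(n-1)})^{z_{n-2}}$. Here $S=R[x]$ and $x\boldsymbol u=(xu_0,xu_1,\dots)$. *)

(* Defs.v *)
From HB Require Import structures.
From mathcomp Require Import all_boot all_order all_algebra.
Set Implicit Arguments. Unset Strict Implicit. Unset Printing Implicit Defensive.
Import Order.TTheory GRing.Theory Num.Theory.
Local Open Scope ring_scope.

Definition hprod (S : comPzRingType) (a b : nat -> S) : nat -> S :=
  fun n => \sum_(h < n.+1) ('C(n, h))%:R * a h * b (n - h)%N.

Definition hunit (S : comPzRingType) : nat -> S := fun n => if n == 0%N then 1 else 0.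

Fixpoint hprods (S : comPzRingType) (f : nat -> nat -> S) (n : nat) : nat -> S :=
  match n with
  | O => hunit S
  | n'.+1 => hprod (hprods f n') (f n)
  end.

(* Partial Bell polynomial Y_{n,k}(y_1, y_2, ...):
   sum over (j_1,...,j_n) with sum j_l = k, sum l j_l = n of
   n! / (prod_l j_l! (l!)^{j_l}) * prod_l y_l^{j_l}.
   The index l : 'I_n represents l+1 in {1..n}; j_l <= n necessarily.
   The coefficient is an integer, computed by exact nat division. *)
Definition bellY (S : comPzRingType) (n k : nat) (y : nat -> S) : S :=
  \sum_(j : {ffun 'I_n -> 'I_n.+1} |
          ((\sum_(l < n) (j l : nat))%N == k) &&
          ((\sum_(l < n) (l.+1 * j l))%N == n))
    ((n`! %/ (\prod_(l < n) ((j l)`! * (l.+1)`! ^ (j l))))%N)%:R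
      * \prod_(l < n) y l.+1 ^+ (j l).

Definition hpow (S : comPzRingType) (a : nat -> S) (z : S) : nat -> S :=
  fun n => \sum_(k < n.+1) bellY n k a * \prod_(i < k) (z - i%:R).

Definition bseq (S : comPzRingType) (i : nat) : nat -> S :=
  if i == 1%N then fun _ => 1
  else fun n => if (n == 0%N) || (n == i) then 1 else 0.

(* tau(z): its n-th entry (index m) is the index-m entry of
   (b^(1))^{z_0} * ... * (b^(N-1))^{z_{N-2}} with N = max(m+1, 2),
   the smallest N >= 2 whose "first N terms" include index m. *)
Definition tau (S : comPzRingType) (z : nat -> S) : nat -> S :=
  fun m => hprods (fun i => hpow (bseq S i) (z i.-1)) (maxn m.+1 2).-1 m.

Definition xseq (R : comNzRingType) (u : nat -> R) : nat -> {poly R} :=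
  fun n => 'X * (u n)%:P.

(* Main.v *)
Require Import Defs.
From HB Require Import structures.
From mathcomp Require Import all_boot all_order all_algebra.
From mathcomp Require Import ring zify.
Set Implicit Arguments. Unset Strict Implicit. Unset Printing Implicit Defensive.
Import Order.TTheory GRing.Theory Num.Theory.

Lemma dvd_block a b : 0 < b -> a`! * b`! ^ a %| (b * a)`!.
Proof.
move=> b0; elim: a => [|a IH]; first by rewrite muln0.
set N := b * a.+1.
have bN : b <= N by rewrite /N mulnS leq_addr.
have NB : N - b = b * a by rewrite /N mulnS addKn.
have hb := bin_fact bN; rewrite NB in hb.
have hd := mul_bin_diag N b.-1; rewrite prednK // in hd.
have Cdef : 'C(N, b) = a.+1 * 'C(N.-1, b.-1).
  apply/eqP; rewrite -(eqn_pmul2l b0) -hd /N; apply/eqP; ring.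
case/dvdnP: IH => q hq.
apply/dvdnP; exists (q * 'C(N.-1, b.-1)).
rewrite -hb Cdef hq factS expnS; ring.
Qed.

Lemma dvd_fact_add x y : x`! * y`! %| (x + y)`!.
Proof. by rewrite -(bin_fact (leq_addr y x)) addKn dvdn_mull. Qed.

Lemma dvd_types (I : Type) (r : seq I) (a b : I -> nat) : (forall i, 0 < b i) ->
  \prod_(i <- r) ((a i)`! * (b i)`! ^ (a i)) %| (\sum_(i <- r) b i * a i)`!.
Proof.
move=> bp; elim: r => [|x r IH]; first by rewrite !big_nil.
rewrite !big_cons; apply: dvdn_trans (dvd_fact_add _ _).
by apply: dvdn_mul => //; apply: dvd_block.
Qed.
Local Open Scope ring_scope.
Definition Nnk n k : nat :=
  \sum_(j : {ffun 'I_n -> 'I_n.+1} |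
          ((\sum_(l < n) (j l : nat))%N == k) &&
          ((\sum_(l < n) (l.+1 * j l))%N == n))
    (n`! %/ (\prod_(l < n) ((j l)`! * (l.+1)`! ^ (j l))))%N.
Definition Epol (N : nat) (x : {poly rat}) : {poly {poly rat}} :=
  \poly_(j < N.+1) ((j`!%:R)^-1 *: x ^+ j).

Lemma fact_neq0 n : (n`!%:R : rat) != 0.
Proof. by rewrite pnatr_eq0 -lt0n fact_gt0. Qed.

Lemma multinom N (a : nat -> {poly rat}) m k : (k <= N)%N ->
  (\prod_(l < m) Epol N (a l))`_k = (k`!%:R)^-1 *: (\sum_(l < m) a l) ^+ k.
Proof.
elim: m k => [|m IH] k kN.
  rewrite !big_ord0 coef1 expr0n; case: k {kN} => [|k] /=; last by rewrite scaler0.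
  by rewrite invr1 scale1r.
rewrite !big_ord_recr /= coefM addrC exprDn scaler_sumr; apply: eq_bigr => j _.
rewrite IH ?(leq_trans (leq_ord j)) // /Epol coef_poly.
rewrite ifT; last by rewrite ltnS (leq_trans (leq_subr j k)).
rewrite -scalerAl -scalerAr scalerA -scaler_nat scalerA [_ * a m ^+ _]mulrC.
congr (_ *: _).
have h := bin_fact (leq_ord j); rewrite -h natrM natrM.
have c0 : ('C(k, j)%:R : rat) != 0 by rewrite pnatr_eq0 -lt0n bin_gt0 leq_ord.
have := fact_neq0 j; have := fact_neq0 (k - j).
move: ('C(k, j)%:R : rat) c0 => C c0 f1 f2.
field; rewrite c0 f1 f2 //.
Qed.

Lemma prodZX (R : comNzRingType) (I : Type) (r : seq I) (c : I -> R) (e : I -> nat) :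
  \prod_(i <- r) (c i *: 'X^(e i)) = (\prod_(i <- r) c i) *: 'X^(\sum_(i <- r) e i).
Proof.
elim: r => [|x r IH]; first by rewrite !big_nil scale1r expr0.
by rewrite !big_cons IH -scalerAl -scalerAr scalerA exprD.
Qed.

Definition a0 (l : nat) : {poly rat} := ((l.+1)`!%:R)^-1 *: 'X^(l.+1).

Lemma expand n k : (k <= n)%N ->
  ((k`!%:R)^-1 *: (\sum_(l < n) a0 l) ^+ k)`_n =
  \sum_(f : {ffun 'I_n -> 'I_n.+1} |
          ((\sum_(l < n) (f l : nat))%N == k) &&
          ((\sum_(l < n) (l.+1 * f l))%N == n))
     ((\prod_(l < n) ((f l)`! * (l.+1)`! ^ (f l)))%N%:R)^-1.
Proof.
move=> kn; rewrite -(multinom a0 n kn) /Epol.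
rewrite (eq_bigr (fun l : 'I_n => \sum_(j < n.+1) ((j`!%:R)^-1 *: a0 l ^+ j) *: 'X^j));
  last by move=> l _; rewrite poly_def.
rewrite bigA_distr_bigA /= coef_sum coef_sum [RHS]big_mkcond /=; apply: eq_bigr => f _.
rewrite prodZX coefZ coefXn.
rewrite (eq_bigr (fun l : 'I_n => ((f l)`!%:R^-1 * ((l.+1)`!%:R^-1) ^+ f l) *: 'X^(l.+1 * f l)));
  last by move=> l _; rewrite /a0 exprZn scalerA -exprM [(l.+1 * _)%N]mulnC.
rewrite prodZX mulr_natr coefMn coefZ coefXn.
rewrite (eq_sym k); case: (_ == k); last by rewrite mulr0n.
rewrite andTb (eq_sym n); case: (_ == n) => /=; last by rewrite mulr0.
rewrite mulr1 natr_prod -prodfV; apply: eq_bigr => l _.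
by rewrite natrM natrX invfM exprVn.
Qed.

Lemma factS_rat l : ((l.+1)`!%:R : rat) = l.+1%:R * l`!%:R.
Proof. by rewrite factS natrM. Qed.

Lemma logA n : (0 < n)%N ->
  let A := \sum_(l < n) a0 l in
  let L := \sum_(k < n) ((-1) ^+ k * (k.+1%:R)^-1) *: A ^+ k.+1 in
  L`_n *+ n = (n == 1%N)%:R.
Proof.
move=> n0 A L.
pose e (l : nat) : {poly rat} := (l`!%:R)^-1 *: 'X^l.
have dA : A^`() = 1 + A - e n.
  suff h : A^`() + e n = 1 + A by rewrite -h addrK.
  rewrite /A raddf_sum /=.
  rewrite (eq_bigr (fun l : 'I_n => e l)); last first.
    move=> l _; rewrite /a0 derivZ derivXn /e /= -scaler_nat scalerA.
    by rewrite factS_rat invfM mulrAC mulVf ?mul1r // pnatr_eq0.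
  rewrite -(big_ord_recr n (fun l => e l)) big_ord_recl /e /= invr1 scale1r expr0.
  by congr (_ + _); apply: eq_bigr.
have dL : L^`() = A^`() * \sum_(k < n) (- A) ^+ k.
  rewrite /L raddf_sum /= mulr_sumr; apply: eq_bigr => k _.
  rewrite derivZ deriv_exp /= -scaler_nat scalerA divfK ?pnatr_eq0 //.
  by rewrite -scaleN1r exprZn -scalerAr.
 
have tele : (1 + A) * \sum_(k < n) (- A) ^+ k = 1 - (- A) ^+ n.
  have h := subrXX 1 (- A) n; rewrite expr1n opprK in h.
  by rewrite h; congr (_ * _); apply: eq_bigr => i _; rewrite expr1n mul1r.
pose B := \sum_(l < n) ((l.+1)`!%:R)^-1 *: ('X^l : {poly rat}).
have AX : A = 'X * B.
  by rewrite /A /B big_distrr; apply: eq_bigr => l _; rewrite /a0 exprS scalerAr.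
have nn : (n.-1 < n)%N by rewrite prednK.
have c1 : ((- A) ^+ n)`_n.-1 = 0.
  by rewrite AX -scaleN1r exprZn coefZ exprMn coefXnM nn mulr0.
have c2 : (e n * \sum_(k < n) (- A) ^+ k)`_n.-1 = 0.
  by rewrite /e -scalerAl coefZ coefXnM nn mulr0.
have : (L^`())`_n.-1 = (n == 1%N)%:R.
  rewrite dL dA mulrBl tele !coefB c1 c2 coef1 !subr0.
  by case: n n0 {A L e dA dL tele B AX nn c1 c2} => [|[|n]].
by rewrite coef_deriv prednK.
Qed.
Lemma Nnk_rat n k : (k <= n)%N ->
  (Nnk n k)%:R = n`!%:R * ((k`!%:R)^-1 *: (\sum_(l < n) a0 l) ^+ k)`_n :> rat.
Proof.
move=> kn; rewrite expand // /Nnk natr_sum mulr_sumr; apply: eq_bigr => f /andP[_ /eqP W].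
have Dp : (0 < \prod_(l < n) ((f l)`! * (l.+1)`! ^ f l))%N.
  by apply: prodn_gt0 => l; rewrite muln_gt0 fact_gt0 expn_gt0 fact_gt0.
rewrite natr_div ?unitfE ?pnatr_eq0 -?lt0n //.
have dv := @dvd_types 'I_n (index_enum 'I_n) (fun l : 'I_n => (f l : nat)) (fun l : 'I_n => l.+1) (fun _ => erefl).
by rewrite /= W in dv.
Qed.

Lemma stirling_rat n : (0 < n)%N ->
  \sum_(k < n) (Nnk n k.+1)%:R * ((-1) ^+ k * k`!%:R) = (n == 1%N)%:R :> rat.
Proof.
move=> n0; have := logA n0 => /=.
set A := \sum_(l < n) a0 l => hL.
rewrite (eq_bigr (fun k : 'I_n => n`!%:R * (((-1) ^+ k / k.+1%:R) *: A ^+ k.+1)`_n)); last first.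
  move=> k _; rewrite Nnk_rat // !coefZ factS_rat.
  have := fact_neq0 k; have : (k.+1%:R : rat) != 0 by rewrite pnatr_eq0.
  move: (k.+1%:R : rat) (k`!%:R : rat) => a b a0 b0.
  field; rewrite a0 b0 //.
rewrite -mulr_sumr -coef_sum.
case: n n0 A hL => [|n] // _ A hL.
rewrite factS_rat -mulrA mulrCA [n.+1%:R * _]mulr_natl hL.
by case: n {A hL} => [|n] /=; rewrite ?mulr1 ?mulr0.
Qed.

Lemma stirling_R (R : comNzRingType) n : (0 < n)%N ->
  \sum_(k < n) (Nnk n k.+1)%:R * ((-1) ^+ k * k`!%:R) = (n == 1%N)%:R :> R.
Proof.
move=> n0.
have hz : \sum_(k < n) (Nnk n k.+1)%:R * ((-1) ^+ k * k`!%:R) = (n == 1%N)%:R :> int.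
  apply: (@intr_inj rat); rewrite rmorph_sum /= [RHS]rmorph_nat -(stirling_rat n0).
  apply: eq_bigr => k _; by rewrite !rmorphM /= rmorphXn rmorphN1 !rmorph_nat.
have := congr1 (fun z : int => (z%:~R : R)) hz; rewrite rmorph_sum /= rmorph_nat => <-.
apply: eq_bigr => k _; by rewrite !rmorphM /= rmorphXn rmorphN1 !rmorph_nat.
Qed.

Section PartA.
Variable R : comNzRingType.

Definition good (F : nat -> {poly R}) := F 0%N = 1 /\ forall n, (0 < n)%N -> (F n)`_0 = 0.

Lemma hprod_good F G : good F -> good G ->
  good (hprod F G) /\ forall n, (0 < n)%N -> (hprod F G n)`_1 = (F n)`_1 + (G n)`_1.
Proof.
move=> [F0 Fc] [G0 Gc]; split; first split.
- by rewrite /hprod big_ord1 bin0 F0 G0 !mulr1.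
- move=> n n0; rewrite /hprod coef_sum big1 // => h _.
  rewrite -mulrA mulr_natl coefMn coef0M.
  case: (posnP h) => [->|hp]; first by rewrite subn0 Gc // mulr0 mul0rn.
  by rewrite Fc // mul0r mul0rn.
- case=> // n _; rewrite /hprod coef_sum big_ord_recl big_ord_recr /=.
  rewrite big1 ?add0r.
  + rewrite !subn0 bin0 subnn binn F0 G0 !mulr1 !mul1r.
    by rewrite /bump /= add1n addrC.
  + move=> h _; rewrite -mulrA mulr_natl coefMn coefM !big_ord_recl big_ord0 /=.
    rewrite /bump /= add1n Fc // Gc ?subn_gt0 ?ltnS // mul0r mulr0 !addr0 mul0rn //.
Qed.

Lemma hunit_good : good (hunit _).
Proof. split; first by []. by move=> [|n] //= _; rewrite /hunit /= coef0. Qed.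

Lemma hprods_good (f : nat -> nat -> {poly R}) M : (forall i, good (f i)) ->
  good (hprods f M) /\ forall n, (0 < n)%N -> (hprods f M n)`_1 = \sum_(i < M) (f i.+1 n)`_1.
Proof.
move=> fg; elim: M => [|M [gM lM]] /=.
  split; first exact: hunit_good.
  by move=> [|n] // _; rewrite big_ord0 /hunit /= coef0.
have [g l] := hprod_good gM (fg M.+1); split=> // n n0.
by rewrite l // lM // big_ord_recr.
Qed.
End PartA.

Lemma bellY00 (S : comPzRingType) (a : nat -> S) : bellY 0 0 a = 1.
Proof.
rewrite /bellY (eq_bigl xpredT) => [|j]; last by rewrite !big_ord0.
rewrite (eq_bigr (fun _ => 1)) => [|j _]; last by rewrite !big_ord0 mulr1.
by rewrite sumr_const card_ffun !card_ord.
Qed.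

Lemma bellYn0 (S : comPzRingType) (a : nat -> S) n : (0 < n)%N -> bellY n 0 a = 0.
Proof.
move=> n0; rewrite /bellY big_pred0 // => f.
apply/negbTE/andP => -[/eqP s0 /eqP sw].
have : (\sum_(l < n) l.+1 * f l <= \sum_(l < n) n * f l)%N.
  by apply: leq_sum => l _; rewrite leq_mul2r ltn_ord orbT.
by rewrite -big_distrr /= s0 muln0 sw leqn0 => /eqP n00; rewrite n00 in n0.
Qed.

Section PartB.
Variable R : comNzRingType.

Lemma hpow_good (a : nat -> {poly R}) (c : R) :
  good (hpow a ('X * c%:P)) /\ forall n, (0 < n)%N ->
   (hpow a ('X * c%:P) n)`_1 =
     \sum_(k < n) (bellY n k.+1 a)`_0 * (c * \prod_(i < k) (- (i.+1)%:R)).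
Proof.
have P0 k : (\prod_(i < k.+1) ('X * c%:P - i%:R) : {poly R})`_0 = 0.
  by rewrite big_ord_recl subr0 coef0M coefXM mul0r.
split; first split.
- by rewrite /hpow big_ord1 bellY00 big_ord0 mulr1.
- move=> n n0; rewrite /hpow coef_sum big1 // => -[[|k] hk] _ /=.
    by rewrite bellYn0 // mul0r coef0.
  by rewrite coef0M P0 mulr0.
- move=> n n0; rewrite /hpow coef_sum big_ord_recl bellYn0 // mul0r coef0 add0r.
  apply: eq_bigr => k _.
  have P1 : (\prod_(i < k.+1) ('X * c%:P - i%:R) : {poly R})`_1 =
            c * \prod_(i < k) (- (i.+1)%:R).
    rewrite big_ord_recl subr0 -mulrA coefXM /= coefCM; congr (_ * _).
    rewrite -horner_coef0 horner_prod; apply: eq_bigr => i _.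
    by rewrite !hornerE /bump add1n hornerMn hornerC.
  rewrite (_ : nat_of_ord (lift ord0 k) = k.+1) //.
  set P := \prod_(i < k.+1) _.
  rewrite coefM 2!big_ord_recl big_ord0 addr0 /= /bump /= subn0 subnn.
  by rewrite P0 P1 mulr0 addr0.
Qed.
End PartB.

Lemma bellY_ones (S : comPzRingType) n k : bellY n k (Defs.bseq S 1) = (Nnk n k)%:R.
Proof.
rewrite /bellY /Nnk natr_sum; apply: eq_bigr => f _.
by rewrite /Defs.bseq /= [X in _ * X]big1 ?mulr1 // => l _; rewrite expr1n.
Qed.

Lemma bellY_bseq (S : comPzRingType) n k i : (0 < n)%N -> (1 < i)%N ->
  bellY n k (Defs.bseq S i) = if n == (i * k)%N then ((n`! %/ (k`! * i`! ^ k))%N)%:R else 0.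
Proof.
move=> n0 i1.
have bs l : Defs.bseq S i l.+1 = (l.+1 == i)%:R.
  by rewrite /Defs.bseq (gtn_eqF i1) /=; case: (l.+1 == i).
rewrite /bellY.
set good := fun f : {ffun 'I_n -> 'I_n.+1} =>
   [forall l : 'I_n, (l.+1 != i) ==> (f l == 0 :> nat)].
rewrite (bigID good) /= [X in _ + X]big1 ?addr0; last first.
  move=> f /andP[_]; rewrite negb_forall => /existsP[l].
  rewrite negb_imply => /andP[li fl].
  by rewrite [X in _ * X](bigD1 l) //= bs (negbTE li) expr0n (negbTE fl) mul0r mulr0.
rewrite (eq_bigr (fun f : {ffun 'I_n -> 'I_n.+1} => ((n`! %/ (\prod_(l < n) ((f l)`! * (l.+1)`! ^ (f l))))%N)%:R));
  last first.
  move=> f /andP[_ /forallP g]; rewrite [X in _ * X]big1 ?mulr1 // => l _.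
  rewrite bs; case: eqP => li; first by rewrite expr1n.
  by move: (g l) => /implyP /(_ (introN eqP li)) /eqP ->; rewrite expr0.
case: (ltnP n i) => [ni|iln].
  have -> : (n == i * k)%N = false.
    by apply/negbTE; case: k => [|k]; lia.
  rewrite big_pred0 // => f; apply/negbTE/andP => -[/andP[_ /eqP W] /forallP g].
  suff S0 : (\sum_(l < n) l.+1 * f l = 0)%N by rewrite S0 in W; rewrite -W in n0.
  apply: big1 => l _.
  have li : l.+1 != i by apply/eqP; have := ltn_ord l; lia.
  by move: (g l) => /implyP /(_ li) /eqP ->; rewrite muln0.
have hl0 : (i.-1 < n)%N by lia.
pose l0 : 'I_n := Ordinal hl0.
have gz f : good f -> forall l, l != l0 -> f l = 0 :> nat.
  move=> /forallP g l ll0; apply/eqP; move: (g l) => /implyP; apply.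
  apply: contra ll0 => /eqP li; apply/eqP/val_inj => /=; lia.
have sumG (G : 'I_n -> nat -> nat) f : (forall l, G l 0%N = 0%N) -> good f ->
    (\sum_(l < n) G l (f l) = G l0 (f l0))%N.
  move=> G0 gf; rewrite (bigD1 l0) //= big1 ?addn0 // => l ll0.
  by rewrite gz // G0.
have prodG (G : 'I_n -> nat -> nat) f : (forall l, G l 0%N = 1%N) -> good f ->
    (\prod_(l < n) G l (f l) = G l0 (f l0))%N.
  move=> G0 gf; rewrite (bigD1 l0) //= big1 ?muln1 // => l ll0.
  by rewrite gz // G0.
have l0i : (l0.+1 = i)%N by rewrite /= prednK //; lia.
have G1 : forall l : 'I_n, (l.+1 * 0 = 0)%N by move=> l; rewrite muln0.
case: eqP => [nik|nik]; last first.
  rewrite big_pred0 // => f; apply/negbTE/andP => -[/andP[/eqP K /eqP W] gf].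
  apply: nik; rewrite -W -K (sumG (fun l x => l.+1 * x)%N _ G1 gf).
  by rewrite (sumG (fun l x => x) _ (fun _ => erefl) gf) l0i.
have kn : (k < n.+1)%N by rewrite nik; case: k nik => [|k]; lia.
pose f0 : {ffun 'I_n -> 'I_n.+1} := [ffun l => if l == l0 then Ordinal kn else ord0].
have gf0 : good f0.
  apply/forallP => l; apply/implyP => li; rewrite ffunE.
  case: (l =P l0) => [ll0|//]; by move: li; rewrite ll0 l0i eqxx.
have f0l0 : f0 l0 = k :> nat by rewrite ffunE eqxx.
rewrite (big_pred1 f0) => [|f] /=.
  rewrite (prodG (fun l x => x`! * (l.+1)`! ^ x)%N _ _ gf0) ?f0l0 ?l0i //.
apply/idP/eqP => [/andP[/andP[/eqP K _] gf] | ->].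
  apply/ffunP => l; apply/val_inj; rewrite ffunE.
  case: eqP => [->|ll0] /=; last by rewrite gz //; apply/eqP.
  by rewrite -K (sumG (fun l x => x) _ (fun _ => erefl) gf).
rewrite gf0 andbT (sumG (fun l x => x) _ (fun _ => erefl) gf0) (sumG (fun l x => l.+1 * x)%N _ G1 gf0).
by rewrite f0l0 l0i nik !eqxx.
Qed.


Lemma prodN (R : comNzRingType) k : \prod_(i < k) (- (i.+1)%:R : R) = (-1) ^+ k * k`!%:R.
Proof.
elim: k => [|k IH]; first by rewrite big_ord0 expr0 mul1r.
by rewrite big_ord_recr /= IH factS natrM exprS; ring.
Qed.

Lemma coef0_nat (R : comNzRingType) n : ((n%:R : {poly R}))`_0 = n%:R.
Proof. by rewrite coefMn coef1. Qed.

Lemma lin_tau (R : comNzRingType) (u : nat -> R) m : (0 < m)%N ->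
  (tau (xseq u) m)`_1 =
  \sum_(i < m) (hpow (Defs.bseq {poly R} i.+1) ('X * (u i)%:P) m)`_1.
Proof.
move=> m0; rewrite /tau.
have -> : (maxn m.+1 2).-1 = m by lia.
have [_ h] := hprods_good
   (f := fun i => hpow (Defs.bseq {poly R} i) ('X * (u i.-1)%:P)) m
   (fun i => (hpow_good _ _).1).
by rewrite /xseq h.
Qed.

Lemma T0 (R : comNzRingType) (c : R) m : (0 < m)%N ->
  (hpow (Defs.bseq {poly R} 1) ('X * c%:P) m)`_1 = c * (m == 1%N)%:R.
Proof.
move=> m0; rewrite (hpow_good _ _).2 // -(stirling_R R m0) mulr_sumr.
apply: eq_bigr => k _; rewrite bellY_ones coef0_nat prodN; ring.
Qed.

Lemma sum_if (R : comNzRingType) d m (G : nat -> R) : (0 < d)%N -> (0 < m)%N ->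
  \sum_(k < m) (if m == (d * k.+1)%N then G k else 0) =
  if (d %| m)%N then G (m %/ d).-1 else 0.
Proof.
move=> d0 m0; rewrite -big_mkcond /=.
case: ifP => dm; last first.
  rewrite big_pred0 // => k; apply/negbTE/eqP => mk.
  by move: dm; rewrite mk dvdn_mulr.
have [j mj] : exists j, m = (j * d)%N by exists (m %/ d)%N; rewrite divnK.
have j0 : (0 < j)%N by move: m0; rewrite mj muln_gt0 => /andP[].
have hj : (j.-1 < m)%N.
  by rewrite mj; apply: leq_trans (leq_pmulr _ d0); rewrite prednK.
rewrite (big_pred1 (Ordinal hj)) => [|k] /=; first by rewrite mj mulnK.
apply/eqP/eqP => [mk|->]; last by rewrite /= prednK // mulnC -mj.
apply/val_inj => /=.
have : (j * d == k.+1 * d)%N by rewrite -mj (mulnC k.+1) -mk.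
by rewrite eqn_pmul2r // => /eqP ->.
Qed.

Lemma Ti (R : comNzRingType) (c : R) i m : (0 < m)%N ->
  (hpow (Defs.bseq {poly R} i.+2) ('X * c%:P) m)`_1 =
  if (i.+2 %| m)%N then
    ((m`! %/ ((m %/ i.+2)`! * i.+2`! ^ (m %/ i.+2)))%N)%:R *
      (c * ((-1) ^+ (m %/ i.+2)%N.-1 * ((m %/ i.+2)%N.-1)`!%:R))
  else 0.
Proof.
move=> m0; rewrite (hpow_good _ _).2 //.
pose G k := ((m`! %/ (k.+1`! * i.+2`! ^ k.+1))%N)%:R * (c * ((-1) ^+ k * k`!%:R)) : R.
rewrite (eq_bigr (fun k : 'I_m => if m == (i.+2 * k.+1)%N then G k else 0)).
  rewrite (sum_if G) // /G; case: ifP => // dm.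
  by rewrite prednK // divn_gt0 // dvdn_leq.
move=> k _; rewrite bellY_bseq // prodN /G.
by case: ifP => _; rewrite ?coef0_nat // coef0 mul0r.
Qed.

Lemma natid m d : (0 < d)%N -> (d %| m)%N -> (0 < m)%N ->
  (m`! %/ ((m %/ d) * d`! ^ (m %/ d)) =
   (m`! %/ ((m %/ d)`! * d`! ^ (m %/ d))) * ((m %/ d).-1)`!)%N.
Proof.
move=> d0 dm m0.
have [j mj] : exists j, m = (j * d)%N by exists (m %/ d)%N; rewrite divnK.
have j0 : (0 < j)%N by move: m0; rewrite mj muln_gt0 => /andP[].
rewrite mj mulnK //.
have dv := dvd_block j d0; rewrite (mulnC d j) in dv.
case: j j0 {mj} dv => [|j] // _ dv.
set q := ((j.+1 * d)`! %/ ((j.+1)`! * d`! ^ j.+1))%N.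
have hq : ((j.+1 * d)`! = q * (j.+1`! * d`! ^ j.+1))%N by rewrite divnK.
rewrite hq /= factS.
have -> : (q * (j.+1 * j`! * d`! ^ j.+1) = (q * j`!) * (j.+1 * d`! ^ j.+1))%N by ring.
by rewrite mulnK // muln_gt0 expn_gt0 fact_gt0.
Qed.

Unset Implicit Arguments.

Theorem mainTheorem11 (R : comNzRingType) (u : nat -> R) :
  let q := tau (xseq u) in
  let c := fun (i n : nat) => (q n)`_i in
  u 0%N = c 1%N 1%N /\
  (forall m : nat, (2 <= m)%N ->
     u m.-1 = c 1%N m +
       \sum_(k <- divisors m | (k != 1%N) && (k != m))
          ((-1) ^+ (m %/ k) *
           ((m`! %/ ((m %/ k) * (k`! ^ (m %/ k))))%N)%:R) * u k.-1) /\
  (forall p : nat, prime p -> u p.-1 = c 1%N p).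
Proof.
move=> q c.
have P2 : forall m : nat, (2 <= m)%N ->
     u m.-1 = c 1%N m +
       \sum_(k <- divisors m | (k != 1%N) && (k != m))
          ((-1) ^+ (m %/ k) *
           ((m`! %/ ((m %/ k) * (k`! ^ (m %/ k))))%N)%:R) * u k.-1.
  move=> m m2; have m0 : (0 < m)%N by lia.
  rewrite /c /q lin_tau //.
  rewrite (perm_big [seq k <- index_iota 0 m.+1 | (k %| m)%N]); last first.
    apply: uniq_perm; [exact: divisors_uniq | exact: filter_uniq (iota_uniq _ _) |].
    move=> k; rewrite mem_filter mem_index_iota -dvdn_divisors //.
    by case dk: (k %| m)%N => //=; rewrite ltnS dvdn_leq.
  rewrite big_filter_cond.
  pose T i := (hpow (Defs.bseq {poly R} i.+1) ('X * (u i)%:P) m)`_1.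
  pose H d := if d is d'.+1 then T d' else 0.
  have -> : \sum_(i < m) (hpow (Defs.bseq {poly R} i.+1) ('X * (u i)%:P) m)`_1 =
            \sum_(0 <= d < m.+1) H d by rewrite big_nat_recl // add0r big_mkord.
  rewrite [X in _ + X]big_mkcond -big_split /= big_nat_recr //= big1_seq ?add0r; last first.
    move=> d /andP[_]; rewrite mem_index_iota => /andP[_ dm].
    case: d dm => [|[|i]] dm /=.
    - by rewrite dvd0n (gtn_eqF m0) /= addr0.
    - by rewrite /H /T T0 // (gtn_eqF m2) mulr0 add0r /= andbF.
    rewrite /H /T Ti //; case: ifP => dv //=; last by rewrite addr0.
    rewrite (ltn_eqF dm) /=.
    rewrite natid //.
    set j := (m %/ i.+2)%N.
    have j0 : (0 < j)%N by rewrite divn_gt0 // dvdn_leq.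
    case: j j0 => [|j] // _ /=.
    rewrite natrM exprS; ring.
  rewrite eqxx !andbF addr0 /H /T.
  case: m m2 m0 {H T} => [|[|i]] // _ _.
  rewrite Ti // dvdnn divnn /= mul1n expn1 divnn fact_gt0 expr0 mul1r mulr1 mul1r.
  by [].
split; first by rewrite /c /q lin_tau // big_ord1 T0 // mulr1.
split => // p pp.
have p2 : (2 <= p)%N by apply: prime_gt1.
rewrite (P2 p p2) big1_seq ?addr0 // => k /andP[/andP[k1 kp]].
rewrite -dvdn_divisors ?prime_gt0 // => kd.
case/primeP: pp => _ /(_ k kd) /orP[] /eqP ke.
  by move: k1; rewrite ke eqxx.
by move: kp; rewrite ke eqxx.
Qed.
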